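(* For every $n\ge 1$, the graph $\widehat{G}_n$ is connected, has maximum degree $3$, has $|V(\widehat{G}_n)| = 6\cdot 4^{n-1}$ vertices, and satisfies $$Z(\widehat{G}_n)\ \ge\ t_n+1=\frac{8\cdot 4^{n-1}+1}{3}\ =\ \Big(\frac49+\frac{1}{18\cdot 4^{n-1}}\Big)|V(\widehat{G}_n)|\ \ge\ \frac49\,|V(\widehat{G}_n)|.$$ In particular, the statement ''$Z(G)\le \frac13|V(G)|+2$ for every connected graph $G$ of maximum degree $3$'' is false.
   Context: Zero forcing: given a graph and a set $S$ of vertices initially colored black (all others white), repeatedly apply the rule: if a black vertex $v$ has exactly one white neighbor $u$, then $u$ becomes black. $S$ is a zero forcing set if eventually every vertex becomes black. $Z(G)$ is the minimum size of a zero forcing set of $G$. Subdivided $K_4$: the complete graph on 4 vertices $a,b,c,e$ with the edge $ab$ subdivided by a new vertex $s$ (5 vertices, edges $as, sb, ac, ae, bc, be, ce$); $s$ is its subdivision vertex. $B_d$ ($d\ge1$) is the complete binary tree with $2^d-1$ vertices and root $r$. $G_n$ ($n\ge1$): take $B_{2n-1}$ with root $r_n$, and for every leaf $\ell$ of $B_{2n-1}$ attach a new copy of the subdivided $K_4$ by identifying $\ell$ with its subdivision vertex. $\widehat{G}_n$ is obtained from $G_n$ by adding a new vertex $y_n$ adjacent only to $r_n$. $t_1=2$, $t_{n+1}=4t_n+2$ for $n\ge1$. *)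

(* Defs.v *)
From HB Require Import structures.
From mathcomp Require Import all_boot all_order all_algebra.
Set Implicit Arguments. Unset Strict Implicit. Unset Printing Implicit Defensive.

Section Graphs.
Variables (T : finType) (e : rel T).

Definition force_step (B : {set T}) : {set T} :=
  B :|: [set u | [exists v, [&& v \in B, e v u, u \notin B &
                     [forall w, (e v w && (w \notin B)) ==> (w == u)]]]].

(* Final colouring obtained from S (the process stabilises after #|T| rounds). *)
Definition zf_closure (S : {set T}) : {set T} := iter #|T| force_step S.

Definition zero_forcing_set (S : {set T}) : bool := zf_closure S == [set: T].

(* Z(G): minimum size of a zero forcing set (setT is always one). *)
Definition Z : nat := \big[minn/#|T|]_(S : {set T} | zero_forcing_set S) #|S|.

Definition connected_graph : Prop := forall x y : T, connect e x y.

Definition degree (v : T) : nat := #|[set w | e v w]|.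
Definition max_degree : nat := \max_(v : T) degree v.

End Graphs.

(* B_{2n-1} has 2^(2n-1) - 1 vertices, with heap indexing: tree ordinal i stands
   for heap index i+1, root = heap index 1, children of p are 2p and 2p+1.
   Its leaves are the heap indices 4^(n-1) + j, j < 4^(n-1).
   Gadget vertices (j, k): copy of the subdivided K4 attached at leaf j,
   with k = 0,1,2,3 standing for a, b, c, e (s is identified with leaf j).
   None is the extra vertex y_n. *)
Definition tree_size (n : nat) : nat := 2 ^ (n.*2.-1) - 1.
Definition nleaves (n : nat) : nat := 4 ^ n.-1.

Definition Vhat (n : nat) : finType :=
  option ('I_(tree_size n) + ('I_(nleaves n) * 'I_4)).

Definition tree_adj (i j : nat) : bool :=
  (j.+1 == i.+1 * 2) || (j.+1 == (i.+1 * 2).+1) ||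
  (i.+1 == j.+1 * 2) || (i.+1 == (j.+1 * 2).+1).

(* tree vertex i is the leaf identified with the subdivision vertex of gadget j,
   adjacent to a (k=0) and b (k=1) *)
Definition leaf_gadget_adj (n : nat) (i j k : nat) : bool :=
  (i == nleaves n + j - 1) && (k < 2).

(* inside a gadget: edges ac, ae, bc, be, ce (all pairs of {a,b,c,e} but ab) *)
Definition gadget_adj (j k j' k' : nat) : bool :=
  (j == j') && (k != k') && ~~ ((k < 2) && (k' < 2)).

Definition ghat_adj (n : nat) : rel (Vhat n) :=
  fun x y =>
    match x, y with
    | None, Some (inl i) => val i == 0
    | Some (inl i), None => val i == 0
    | Some (inl i), Some (inl i') => tree_adj i i'
    | Some (inl i), Some (inr p) => leaf_gadget_adj n i p.1 p.2
    | Some (inr p), Some (inl i) => leaf_gadget_adj n i p.1 p.2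
    | Some (inr p), Some (inr p') => gadget_adj p.1 p.2 p'.1 p'.2
    | _, _ => false
    end.

(* t_1 = 2, t_{n+1} = 4 t_n + 2 (t 0 is an unused convention). *)
Fixpoint t (n : nat) : nat :=
  match n with
  | 0 => 0
  | m.+1 => if m == 0 then 2 else 4 * t m + 2
  end.

(* Main.v *)
Require Import Defs.
From HB Require Import structures.
From mathcomp Require Import all_boot all_order all_algebra.
From mathcomp Require Import zify ring lra.
Import GRing.Theory Num.Theory.
Set Implicit Arguments. Unset Strict Implicit. Unset Printing Implicit Defensive.

Lemma nleaves_gt0 N : 0 < nleaves N.
Proof. by rewrite /nleaves expn_gt0. Qed.

Lemma ts_eq N : 0 < N -> tree_size N = (nleaves N).*2.-1.
Proof.
case: N => // n _; rewrite /tree_size /nleaves doubleS /= expnS -mul2n expnM.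
by rewrite subn1 mul2n.
Qed.

Definition tv N (p : nat) : Vhat N :=
  if p is q.+1 then oapp (fun i => Some (inl i)) None (insub q : option 'I_(tree_size N))
  else None.

Definition gv N (j k : nat) : Vhat N :=
  match (insub j : option 'I_(nleaves N)), (insub k : option 'I_4) with
  | Some j', Some k' => Some (inr (j', k'))
  | _, _ => None end.

Definition anchor N (x : Vhat N) : nat :=
  match x with None => 0 | Some (inl i) => i.+1 | Some (inr p) => nleaves N + p.1 end.

Lemma tv_ord N (i : 'I_(tree_size N)) : tv N i.+1 = Some (inl i).
Proof. by rewrite /tv valK. Qed.

Lemma gv_ord N (j : 'I_(nleaves N)) (k : 'I_4) : gv N j k = Some (inr (j, k)).
Proof. by rewrite /gv !valK. Qed.

Lemma tv_valid N p : 0 < p <= tree_size N -> exists i : 'I_(tree_size N), p = i.+1 /\ tv N p = Some (inl i).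
Proof.
case: p => // q /= Hq; exists (Ordinal Hq); split => //.
exact: (tv_ord (Ordinal Hq)).
Qed.

Lemma anchor_tv N p : 0 < p <= tree_size N -> anchor (tv N p) = p.
Proof. by move=> /tv_valid [i [-> ->]]. Qed.

Lemma tv_inj N p q : 0 < p <= tree_size N -> 0 < q <= tree_size N -> tv N p = tv N q -> p = q.
Proof. move=> Hp Hq E; by rewrite -(anchor_tv Hp) -(anchor_tv Hq) E. Qed.

Lemma anchor_adj N (x y : Vhat N) : ghat_adj x y ->
  [\/ anchor y = anchor x, anchor y = (anchor x) %/ 2 | anchor x = (anchor y) %/ 2].
Proof.
have L0 := nleaves_gt0 N.
case: x => [[i|[j k]]|]; case: y => [[i'|[j' k']]|] //=; rewrite /tree_adj /leaf_gadget_adj /gadget_adj /=.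
- move=> /orP[/orP[/orP[]|]|] /eqP E.
  + apply: Or33; lia.
  + apply: Or33; lia.
  + apply: Or32; lia.
  + apply: Or32; lia.
- move=> /andP[/eqP E _]; apply: Or31; lia.
- by move=> /eqP ->; apply: Or32.
- move=> /andP[/eqP E _]; apply: Or31; lia.
- by move=> /andP[/andP[/eqP -> _] _]; apply: Or31.
- by move=> /eqP ->; apply: Or33.
Qed.

Definition desc (g a : nat) : bool := [exists d : 'I_a.+1, a %/ 2 ^ d == g].

Lemma divn_exp2D a x y : a %/ 2 ^ (x + y) = a %/ 2 ^ x %/ 2 ^ y.
Proof. by rewrite expnD divnMA. Qed.

Lemma descP g a : 0 < g -> reflect (exists d, a %/ 2 ^ d = g) (desc g a).
Proof.
move=> g0; apply: (iffP existsP) => [[d /eqP E]|[d E]]; first by exists d.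
have Hd : d < a.+1.
  have : 0 < a %/ 2 ^ d by rewrite E.
  rewrite divn_gt0 ?expn_gt0 // => H; apply: leq_trans (ltn_expl d (isT : 1 < 2)) _; lia.
by exists (Ordinal Hd); rewrite /= E.
Qed.

Lemma desc_le g a : desc g a -> g <= a.
Proof. by case/existsP => d /eqP <-; apply: leq_div. Qed.

Lemma desc_refl a : 0 < a -> desc a a.
Proof. by move=> a0; apply/descP => //; exists 0; rewrite divn1. Qed.

Lemma desc_trans h g a : 0 < h -> desc h g -> desc g a -> desc h a.
Proof.
move=> h0 /(descP _ h0) [d1 E1].
have g0 : 0 < g by move: h0; rewrite -E1; case: (g) => //; rewrite div0n.
move=> /(descP _ g0) [d2 E2]; apply/descP => //; exists (d2 + d1).
by rewrite divn_exp2D E2.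
Qed.

Lemma desc_cmp g g' a : 0 < g -> 0 < g' -> desc g a -> desc g' a -> g <= g' -> desc g g'.
Proof.
move=> g0 g'0 /(descP _ g0) [d E] /(descP _ g'0) [d' E'] le; apply/descP => //.
case: (leqP d' d) => Hdd.
  exists (d - d'); by rewrite -E' -divn_exp2D subnKC.
have : g' = g %/ 2 ^ (d' - d) by rewrite -E -divn_exp2D subnKC // ltnW.
have : 2 <= 2 ^ (d' - d).
  by rewrite -{1}(expn1 2) leq_exp2l // subn_gt0.
move=> H2 Eg; move: le; rewrite Eg => le.
have : g %/ 2 ^ (d' - d) < g by rewrite ltn_Pdiv // expn_gt0.
lia.
Qed.

Lemma desc_small g g' : 0 < g -> g < g' -> g' < g.*2 -> ~~ desc g g'.
Proof.
move=> g0 lt1 lt2; apply/negP => /(descP _ g0) [[|d]]; first by rewrite divn1; lia.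
rewrite -[d.+1]add1n divn_exp2D expn1 => E.
have : g' %/ 2 %/ 2 ^ d <= g' %/ 2 by apply: leq_div.
have : g' %/ 2 < g by rewrite ltn_divLR //; lia.
lia.
Qed.

Lemma desc_child h c : 0 < h -> c < 4 -> desc h (4 * h + c).
Proof.
move=> h0 c4; apply/descP => //; exists 2.
rewrite expnS expn1 mulnC divnMDl //. rewrite divn_small //. by rewrite addn0.
Qed.

Lemma desc_quarter h a : 0 < h -> desc h a ->
  [\/ a = h, a = h.*2, a = h.*2.+1 | exists2 c, c < 4 & desc (4 * h + c) a].
Proof.
move=> h0 /(descP _ h0) [[|[|d]]].
- by rewrite divn1 => ->; apply: Or41.
- rewrite expn1 => E.
  have H := divn_eq a 2; have H2 := ltn_pmod a (isT : 0 < 2); rewrite E in H.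
  have [Hm|Hm] : a %% 2 = 0 \/ a %% 2 = 1 by lia.
  + apply: Or42; lia.
  + apply: Or43; lia.
- move=> E; apply: Or44.
  have E2 : a %/ 2 ^ d %/ 4 = h by rewrite -E -(addn2 d) divn_exp2D.
  exists (a %/ 2 ^ d - 4 * h).
    have := ltn_pmod (a %/ 2 ^ d) (isT : 0 < 4).
    have := divn_eq (a %/ 2 ^ d) 4; rewrite E2; lia.
  have h4 : 0 < 4 * h + (a %/ 2 ^ d - 4 * h) by lia.
  apply/descP => //; exists d.
  have := divn_eq (a %/ 2 ^ d) 4; rewrite E2; lia.
Qed.

Lemma desc_point h a : 0 < h ->
  (a == h) + (a == h.*2) + (a == h.*2.+1)
  + desc (4 * h) a + desc (4 * h + 1) a + desc (4 * h + 2) a + desc (4 * h + 3) a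
  <= desc h a.
Proof.
move=> h0.
have Dc : forall c, c < 4 -> desc (4 * h + c) a -> desc h a /\ 4 * h <= a.
  move=> c c4 D; split; last by have := desc_le D; lia.
  exact: desc_trans h0 (desc_child h0 c4) D.
have X : forall c c', c < c' -> c' < 4 -> desc (4 * h + c) a -> desc (4 * h + c') a -> False.
  move=> c c' lt c4 D D'.
  have H : desc (4 * h + c) (4 * h + c') by apply: (desc_cmp _ _ D D'); lia.
  by move: H; apply/negP; apply: desc_small; lia.
have E0 : 4 * h = 4 * h + 0 by rewrite addn0.
have [A0 B0] : (desc (4 * h) a -> desc h a) /\ (desc (4 * h) a -> 4 * h <= a).
  by rewrite {1 2}E0; split => /(Dc 0 isT) [].
have [A1 B1] : (desc (4 * h + 1) a -> desc h a) /\ (desc (4 * h + 1) a -> 4 * h <= a).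
  by split => /(Dc 1 isT) [].
have [A2 B2] : (desc (4 * h + 2) a -> desc h a) /\ (desc (4 * h + 2) a -> 4 * h <= a).
  by split => /(Dc 2 isT) [].
have [A3 B3] : (desc (4 * h + 3) a -> desc h a) /\ (desc (4 * h + 3) a -> 4 * h <= a).
  by split => /(Dc 3 isT) [].
have X01 : desc (4 * h) a -> desc (4 * h + 1) a -> False by rewrite {1}E0; apply: X.
have X02 : desc (4 * h) a -> desc (4 * h + 2) a -> False by rewrite {1}E0; apply: X.
have X03 : desc (4 * h) a -> desc (4 * h + 3) a -> False by rewrite {1}E0; apply: X.
have X12 : desc (4 * h + 1) a -> desc (4 * h + 2) a -> False by apply: X.
have X13 : desc (4 * h + 1) a -> desc (4 * h + 3) a -> False by apply: X.
have X23 : desc (4 * h + 2) a -> desc (4 * h + 3) a -> False by apply: X.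
have Y0 : a == h -> desc h a by move=> /eqP ->; apply: desc_refl.
have Y1 : a == h.*2 -> desc h a.
  by move=> /eqP ->; apply/descP => //; exists 1; rewrite expn1; lia.
have Y2 : a == h.*2.+1 -> desc h a.
  move=> /eqP ->; apply/descP => //; exists 1; rewrite expn1; lia.
by case: (desc h a) A0 A1 A2 A3 B0 B1 B2 B3 X01 X02 X03 X12 X13 X23 Y0 Y1 Y2; lia.
Qed.

Definition Pf N (F : {set Vhat N}) (v : Vhat N) : Prop :=
  v \notin F -> forall x, x \in F -> ghat_adj v x ->
  exists2 x', x' \in F & (x' != x) && ghat_adj v x'.

Definition fortS N (S : {set Vhat N}) : Prop :=
  exists F : {set Vhat N}, [/\ F != set0, (forall x, x \in F -> x \notin S) & forall v, Pf F v].

Definition Cp N (S : {set Vhat N}) (h : nat) : Prop :=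
  exists F : {set Vhat N}, [/\ tv N h \in F, (forall x, x \in F -> x \notin S) &
      forall v, v != tv N (h %/ 2) -> Pf F v].

Lemma Pf_U N (F1 F2 : {set Vhat N}) v : Pf F1 v -> Pf F2 v -> Pf (F1 :|: F2) v.
Proof.
move=> P1 P2; rewrite /Pf in_setU negb_or => /andP[n1 n2] x; rewrite in_setU => /orP[x1|x2] a.
  by have [x' H1 H2] := P1 n1 x x1 a; exists x' => //; rewrite in_setU H1.
by have [x' H1 H2] := P2 n2 x x2 a; exists x' => //; rewrite in_setU H1 orbT.
Qed.

Lemma Pf_nadj N (F : {set Vhat N}) v : (forall x, x \in F -> ~~ ghat_adj v x) -> Pf F v.
Proof. by move=> H _ x xF a; move: (H x xF); rewrite a. Qed.

Lemma fort_notzf N (S : {set Vhat N}) : fortS S -> ~~ zero_forcing_set (@ghat_adj N) S.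
Proof.
case=> F [F0 FS PF].
have inv : forall k x, x \in F -> x \notin iter k (force_step (@ghat_adj N)) S.
  elim=> [|k IH] x xF /=; first exact: FS.
  rewrite /force_step in_setU negb_or IH //= inE.
  apply/negP => /existsP [v /and4P [vB avx xB /forallP Hw]].
  have vF : v \notin F by apply/negP => vF; move: (IH v vF); rewrite vB.
  have [x' x'F /andP [nx' avx']] := PF v vF x xF avx.
  move: (Hw x'); rewrite avx' /= (IH x' x'F) /= => /eqP E.
  by move: nx'; rewrite E eqxx.
apply/negP; rewrite /zero_forcing_set /zf_closure => /eqP E.
case/set0Pn: F0 => x xF; by move: (inv #|Vhat N| x xF); rewrite E inE.
Qed.

Lemma ghat_sym N : symmetric (@ghat_adj N).
Proof.
move=> x y; case: x => [[i|[j k]]|]; case: y => [[i'|[j' k']]|] //=.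
- by rewrite /tree_adj; case: (_ == _); case: (_ == _); case: (_ == _); case: (_ == _).
- by rewrite /gadget_adj /= (eq_sym (nat_of_ord j)) (eq_sym (nat_of_ord k)) (andbC (k' < 2)).
Qed.

Lemma ghat_irr N : irreflexive (@ghat_adj N).
Proof.
move=> x; case: x => [[i|[j k]]|] //=.
- rewrite /tree_adj; apply/negP; move=> /orP[/orP[/orP[]|]|] /eqP; lia.
- by rewrite /gadget_adj !eqxx.
Qed.

Definition gg N (j : 'I_(nleaves N)) (k : nat) : Vhat N := Some (inr (j, inord k)).

Lemma adj_tv N p q : 0 < p <= tree_size N -> 0 < q <= tree_size N ->
  ghat_adj (tv N p) (tv N q) = (q == p.*2) || (q == p.*2.+1) || (p == q.*2) || (p == q.*2.+1).
Proof.
move=> /tv_valid [i [-> ->]] /tv_valid [i' [-> ->]] /=; by rewrite /tree_adj !muln2.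
Qed.

Lemma nbr_tv N v p : 0 < N -> 0 < p <= tree_size N -> ghat_adj v (tv N p) ->
  [\/ v = tv N (p %/ 2), p.*2 <= tree_size N /\ v = tv N p.*2,
      p.*2.+1 <= tree_size N /\ v = tv N p.*2.+1 |
      exists2 j : 'I_(nleaves N), p = nleaves N + j & exists2 k, k < 2 & v = gg j k].
Proof.
move=> N0 Hp; have L0 := nleaves_gt0 N; have [i [Ep ->]] := tv_valid Hp.
set a := tv N (p %/ 2); set b := tv N p.*2; set c := tv N p.*2.+1.
case: v => [[i'|[j k]]|] /=.
- rewrite /tree_adj Ep -!(addn1 (_ * 2)) => /orP[/orP[/orP[]|]|] /eqP E.
  + apply: Or41; rewrite /a -tv_ord; congr (tv N _); lia.
  + apply: Or41; rewrite /a -tv_ord; congr (tv N _); lia.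
  + apply: Or42; split; first by have := ltn_ord i'; lia. rewrite /b -tv_ord; congr (tv N _); lia.
  + apply: Or43; split; first by have := ltn_ord i'; lia. rewrite /c -tv_ord; congr (tv N _); lia.
- rewrite /leaf_gadget_adj => /andP[/eqP E k2]; apply: Or44; exists j; first by lia.
  exists k => //; rewrite /gg; congr (Some (inr (_, _))); apply: val_inj; rewrite /= inordK //; lia.
- by move=> /eqP E; apply: Or41; rewrite /a Ep E.
Qed.

Lemma nbr_gg N v (j : 'I_(nleaves N)) k : 0 < N -> k < 4 -> ghat_adj v (gg j k) ->
  (k < 2 /\ v = tv N (nleaves N + j)) \/ exists2 k', k' < 4 & (k' != k) && (v == gg j k').
Proof.
move=> N0 k4; have L0 := nleaves_gt0 N.
case: v => [[i'|[j' k']]|] //=; rewrite /leaf_gadget_adj /gadget_adj /= inordK //.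
- move=> /andP [/eqP E k2]; left; split => //; rewrite -tv_ord; apply: f_equal; lia.
- move=> /andP [/andP [/eqP E nk] _]; right; exists k' => //; rewrite nk /gg /=.
  by apply/eqP; congr (Some (inr (_, _))); [apply: val_inj | apply: val_inj; rewrite /= inordK].
Qed.

Definition sb N (S : {set Vhat N}) h : nat :=
  \sum_(x : Vhat N) ((x \in S) && desc h (anchor x)).

Lemma card_sumb (T : finType) (S : {set T}) : #|S| = \sum_x (x \in S : nat).
Proof. rewrite -sum1_card big_mkcond; apply: eq_bigr => x _; by case: (x \in S). Qed.

Lemma sum_eq1 (T : finType) (S : {set T}) y : \sum_x ((x \in S) && (x == y) : nat) = (y \in S).
Proof.
rewrite (bigD1 y) //= eqxx andbT big1 ?addn0 // => x /negbTE ->; by rewrite andbF.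
Qed.

Lemma sb_top N (S : {set Vhat N}) : sb S 1 + (None \in S) <= #|S|.
Proof.
rewrite card_sumb /sb (bigD1 None) //= [X in _ <= X](bigD1 None) //=.
have -> : desc 1 0 = false by apply/negbTE/negP => H; have := desc_le H.
rewrite andbF add0n addnC leq_add2l; apply: leq_sum => x _; by case: (x \in S); case: desc.
Qed.

Lemma eq_tv_anchor N (x : Vhat N) p : 0 < p <= tree_size N -> (x == tv N p) <= (anchor x == p).
Proof. move=> Hp; case: eqP => // ->; by rewrite anchor_tv ?eqxx. Qed.

Lemma sb_step N (S : {set Vhat N}) h : 0 < h -> h.*2.+1 <= tree_size N ->
  (tv N h \in S) + (tv N h.*2 \in S) + (tv N h.*2.+1 \in S)
  + sb S (4 * h) + sb S (4 * h + 1) + sb S (4 * h + 2) + sb S (4 * h + 3) <= sb S h.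
Proof.
move=> h0 Hh; rewrite -!sum_eq1 /sb -!big_split; apply: leq_sum => x _.
set a := tv N h; set b := tv N h.*2; set c := tv N h.*2.+1; rewrite /=.
case: (x \in S); rewrite ?andTb ?andFb //.
have A1 : 0 < h <= tree_size N by lia.
have A2 : 0 < h.*2 <= tree_size N by lia.
have A3 : 0 < h.*2.+1 <= tree_size N by lia.
have := eq_tv_anchor x A1; have := eq_tv_anchor x A2; have := eq_tv_anchor x A3.
have := desc_point (anchor x) h0. rewrite /a /b /c. lia.
Qed.

Lemma count_le_card (T : finType) (A : {set T}) (ys : seq T) : uniq ys -> count (mem A) ys <= #|A|.
Proof.
move=> u; rewrite -size_filter.
have u' : uniq (filter (mem A) ys) by rewrite filter_uniq.
move/card_uniqP: u' => <-; apply: subset_leq_card; apply/subsetP => x; by rewrite mem_filter => /andP[].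
Qed.

Lemma sb_card N (S : {set Vhat N}) h : sb S h = #|[set x in S | desc h (anchor x)]|.
Proof.
rewrite card_sumb /sb; apply: eq_bigr => x _; by rewrite inE.
Qed.

Lemma gg_neq N (j : 'I_(nleaves N)) k k' : k < 4 -> k' < 4 -> k != k' -> gg j k != gg j k'.
Proof.
move=> k4 k'4 nk; apply/negP => /eqP [] /(congr1 val) /=; rewrite !inordK // => E.
by move: nk; rewrite E eqxx.
Qed.

Lemma adj_gg N (j : 'I_(nleaves N)) k k' : k < 4 -> k' < 4 ->
  ghat_adj (gg j k) (gg j k') = (k != k') && ~~ ((k < 2) && (k' < 2)).
Proof. by move=> k4 k'4; rewrite /= /gadget_adj /= !inordK // eqxx. Qed.

Lemma adj_gg_leaf N (j : 'I_(nleaves N)) k : 0 < N -> k < 4 ->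
  ghat_adj (gg j k) (tv N (nleaves N + j)) = (k < 2).
Proof.
move=> N0 k4; have L0 := nleaves_gt0 N.
have Hp : 0 < nleaves N + j <= tree_size N by rewrite ts_eq //; have := ltn_ord j; lia.
have [i [Ei ->]] := tv_valid Hp; rewrite /= /leaf_gadget_adj /= inordK //.
have -> : (nat_of_ord i == nleaves N + j - 1) = true by apply/eqP; lia.
by [].
Qed.

Lemma adj01 N (j : 'I_(nleaves N)) v : ghat_adj v (gg j 0) = ghat_adj v (gg j 1).
Proof.
case: v => [[i|[j' [k' Hk]]]|] //=; rewrite /leaf_gadget_adj /gadget_adj /= ?inordK //.
by case: k' Hk => [|[|[|[|k]]]]; rewrite ?andbF ?andbT.
Qed.

Lemma adj23 N (j : 'I_(nleaves N)) v : v != gg j 2 -> v != gg j 3 ->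
  ghat_adj v (gg j 2) = ghat_adj v (gg j 3).
Proof.
case: v => [[i|[j' [k' Hk]]]|] //=; rewrite /leaf_gadget_adj /gadget_adj /= ?inordK //.
move=> n2 n3; case: eqP => [E|_] //=.
have Ej : j' = j by apply: val_inj.
rewrite Ej in n2 n3.
case: k' Hk n2 n3 => [|[|[|[|k]]]] Hk n2 n3 //.
- by move: n2; rewrite /gg (_ : Ordinal Hk = inord 2) ?eqxx //; apply: val_inj; rewrite /= inordK.
- by move: n3; rewrite /gg (_ : Ordinal Hk = inord 3) ?eqxx //; apply: val_inj; rewrite /= inordK.
Qed.

Lemma fort01 N (S : {set Vhat N}) (j : 'I_(nleaves N)) : gg j 0 \notin S -> gg j 1 \notin S -> fortS S.
Proof.
move=> n0 n1; exists [set gg j 0; gg j 1]; split.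
- by apply/set0Pn; exists (gg j 0); rewrite !inE eqxx.
- by move=> x; rewrite !inE => /orP[] /eqP ->.
- move=> v vF x; rewrite !inE => /orP[] /eqP -> a.
  + exists (gg j 1); first by rewrite !inE eqxx orbT.
    by rewrite -adj01 a andbT eq_sym gg_neq.
  + exists (gg j 0); first by rewrite !inE eqxx.
    by rewrite adj01 a andbT gg_neq.
Qed.

Lemma fort23 N (S : {set Vhat N}) (j : 'I_(nleaves N)) : gg j 2 \notin S -> gg j 3 \notin S -> fortS S.
Proof.
move=> n0 n1; exists [set gg j 2; gg j 3]; split.
- by apply/set0Pn; exists (gg j 2); rewrite !inE eqxx.
- by move=> x; rewrite !inE => /orP[] /eqP ->.
- move=> v; rewrite /Pf !inE negb_or => /andP[v2 v3] x; rewrite !inE => /orP[] /eqP -> a.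
  + exists (gg j 3); first by rewrite !inE eqxx orbT.
    by rewrite -adj23 // a andbT eq_sym gg_neq.
  + exists (gg j 2); first by rewrite !inE eqxx.
    by rewrite adj23 // a andbT gg_neq.
Qed.

Lemma pick3 (T : finType) (S : {set T}) a b c x : a != b -> a != c -> b != c ->
  (a \in S) + (b \in S) + (c \in S) <= 1 ->
  exists2 y, y \in [:: a; b; c] & (y \notin S) && (y != x).
Proof.
move=> ab ac bc le.
case: (boolP ((a \notin S) && (a != x))) => [H|Ha]; first by exists a; rewrite ?inE ?eqxx.
case: (boolP ((b \notin S) && (b != x))) => [H|Hb]; first by exists b; rewrite ?inE ?eqxx ?orbT.
exists c; first by rewrite !inE eqxx !orbT.
move: Ha Hb; rewrite !negb_and !negbK.
have X1 : a == x -> b == x -> false by move=> /eqP E1 /eqP E2; rewrite E1 E2 eqxx in ab.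
have X2 : a == x -> c == x -> false by move=> /eqP E1 /eqP E2; rewrite E1 E2 eqxx in ac.
have X3 : b == x -> c == x -> false by move=> /eqP E1 /eqP E2; rewrite E1 E2 eqxx in bc.
move: X1 X2 X3 le; case: (a == x); case: (b == x); case: (c == x);
  case: (a \in S); case: (b \in S); case: (c \in S) => //= X1 X2 X3; try by [move: (X1 isT) | move: (X2 isT) | move: (X3 isT)].
Qed.

Lemma leaf_facts N (j : 'I_(nleaves N)) : 0 < N ->
  [/\ 0 < nleaves N + j <= tree_size N, tree_size N < (nleaves N + j).*2 &
      (nleaves N + j) %/ 2 < nleaves N].
Proof.
move=> N0; have L0 := nleaves_gt0 N; have := ltn_ord j; rewrite ts_eq //; split; lia.
Qed.

Lemma tv_gg N p (j : 'I_(nleaves N)) k : 0 < p <= tree_size N -> tv N p != gg j k.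
Proof. by move=> /tv_valid [i [_ ->]]. Qed.

Lemma sb_base N (S : {set Vhat N}) (j : 'I_(nleaves N)) : 0 < N ->
  (tv N (nleaves N + j) \in S) + (gg j 0 \in S) + (gg j 1 \in S) + (gg j 2 \in S) + (gg j 3 \in S)
  <= sb S (nleaves N + j).
Proof.
move=> N0; have [Hh H2 _] := leaf_facts j N0.
rewrite sb_card.
set ys := [:: tv N (nleaves N + j); gg j 0; gg j 1; gg j 2; gg j 3].
have U : uniq ys.
  rewrite /ys /= !inE !negb_or !tv_gg // !gg_neq //.
have := count_le_card [set x in S | desc (nleaves N + j) (anchor x)] U.
have D : desc (nleaves N + j) (nleaves N + j) by apply: desc_refl; lia.
rewrite /ys /= !inE anchor_tv // D !andbT addn0 !addnA; by [].
Qed.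

Definition blk N (j : 'I_(nleaves N)) : {set Vhat N} :=
  [set tv N (nleaves N + j); gg j 0; gg j 1; gg j 2; gg j 3].

Lemma gg_blk N (j : 'I_(nleaves N)) k v : 0 < N -> k < 4 -> ghat_adj v (gg j k) -> v \in blk j.
Proof.
move=> N0 k4 a; case: (nbr_gg N0 k4 a) => [[_ ->]|[k' k'4 /andP[_ /eqP ->]]].
  by rewrite !inE eqxx.
by case: k' k'4 => [|[|[|[|]]]] //= _; rewrite !inE eqxx ?orbT.
Qed.

Lemma blk_nbr N (j : 'I_(nleaves N)) v x : 0 < N -> x \in blk j -> ghat_adj v x ->
  v != tv N ((nleaves N + j) %/ 2) -> v \in blk j.
Proof.
move=> N0 xB a vpar; have [Hh H2 H3] := leaf_facts j N0.
rewrite !inE in xB; case/orP: xB => [/orP[/orP[/orP[]|]|]|] /eqP Ex; rewrite Ex in a.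
- case: (nbr_tv N0 Hh a) => [E|[H _]|[H _]|[j' Ej' [k k2 ->]]].
  + by rewrite E eqxx in vpar.
  + exfalso; lia.
  + exfalso; lia.
  + have -> : j' = j by apply: val_inj => /=; lia.
    by case: k k2 => [|[|]] //= _; rewrite !inE eqxx ?orbT.
all: by apply: (gg_blk N0 _ a).
Qed.

Lemma blk_pick N (S : {set Vhat N}) (j : 'I_(nleaves N)) k0 x : 0 < N -> k0 < 4 ->
  tv N (nleaves N + j) \notin S -> gg j k0 \in S ->
  (gg j 0 \in S) + (gg j 1 \in S) + (gg j 2 \in S) + (gg j 3 \in S) <= 2 ->
  exists2 y, y \in blk j :\: S & (y != x) && ghat_adj (gg j k0) y.
Proof.
move=> N0 k4 nS kS bud; have [Hh H2 H3] := leaf_facts j N0.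
have n01 := gg_neq j (isT : 0 < 4) (isT : 1 < 4) isT.
have n02 := gg_neq j (isT : 0 < 4) (isT : 2 < 4) isT.
have n03 := gg_neq j (isT : 0 < 4) (isT : 3 < 4) isT.
have n12 := gg_neq j (isT : 1 < 4) (isT : 2 < 4) isT.
have n13 := gg_neq j (isT : 1 < 4) (isT : 3 < 4) isT.
have n23 := gg_neq j (isT : 2 < 4) (isT : 3 < 4) isT.
have t2 := tv_gg j 2 Hh; have t3 := tv_gg j 3 Hh.
case: k0 k4 kS => [|[|[|[|//]]]] _ kS.
- have b : (tv N (nleaves N + j) \in S) + (gg j 2 \in S) + (gg j 3 \in S) <= 1.
    by move: bud; rewrite kS (negbTE nS); case: (gg j 1 \in S); case: (gg j 2 \in S); case: (gg j 3 \in S).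
  have [y Hy /andP [yS yx]] := pick3 x t2 t3 n23 b.
  exists y; first by move: Hy; rewrite !inE yS => /or3P[] /eqP ->; rewrite eqxx ?orbT.
  rewrite yx; move: Hy; rewrite !inE => /or3P[] /eqP ->; by rewrite ?adj_gg_leaf ?adj_gg.
- have b : (tv N (nleaves N + j) \in S) + (gg j 2 \in S) + (gg j 3 \in S) <= 1.
    by move: bud; rewrite kS (negbTE nS); case: (gg j 0 \in S); case: (gg j 2 \in S); case: (gg j 3 \in S).
  have [y Hy /andP [yS yx]] := pick3 x t2 t3 n23 b.
  exists y; first by move: Hy; rewrite !inE yS => /or3P[] /eqP ->; rewrite eqxx ?orbT.
  rewrite yx; move: Hy; rewrite !inE => /or3P[] /eqP ->; by rewrite ?adj_gg_leaf ?adj_gg.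
- have b : (gg j 0 \in S) + (gg j 1 \in S) + (gg j 3 \in S) <= 1.
    by move: bud; rewrite kS; case: (gg j 0 \in S); case: (gg j 1 \in S); case: (gg j 3 \in S).
  have [y Hy /andP [yS yx]] := pick3 x n01 n03 n13 b.
  exists y; first by move: Hy; rewrite !inE yS => /or3P[] /eqP ->; rewrite eqxx ?orbT.
  rewrite yx; move: Hy; rewrite !inE => /or3P[] /eqP ->; by rewrite ?adj_gg.
- have b : (gg j 0 \in S) + (gg j 1 \in S) + (gg j 2 \in S) <= 1.
    by move: bud; rewrite kS; case: (gg j 0 \in S); case: (gg j 1 \in S); case: (gg j 2 \in S).
  have [y Hy /andP [yS yx]] := pick3 x n01 n02 n12 b.
  exists y; first by move: Hy; rewrite !inE yS => /or3P[] /eqP ->; rewrite eqxx ?orbT.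
  rewrite yx; move: Hy; rewrite !inE => /or3P[] /eqP ->; by rewrite ?adj_gg.
Qed.

Lemma base_C N (S : {set Vhat N}) (j : 'I_(nleaves N)) : 0 < N ->
  tv N (nleaves N + j) \notin S ->
  (gg j 0 \in S) + (gg j 1 \in S) + (gg j 2 \in S) + (gg j 3 \in S) <= 2 ->
  Cp S (nleaves N + j).
Proof.
move=> N0 nS bud; have [Hh H2 H3] := leaf_facts j N0.
exists (blk j :\: S); split.
- by rewrite !inE eqxx nS.
- by move=> x; rewrite inE => /andP[].
move=> v vpar; rewrite /Pf => vF x; rewrite inE => /andP [xS xB] a.
have vB := blk_nbr N0 xB a vpar.
have vS : v \in S by move: vF; rewrite inE vB andbT negbK.
move: vB; rewrite !inE => /orP[/orP[/orP[/orP[]|]|]|] /eqP Ev.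
- by move: vS; rewrite Ev (negbTE nS).
all: rewrite Ev in vS *; exact: blk_pick.
Qed.

Lemma tv_neq N p q : 0 < p <= tree_size N -> 0 < q <= tree_size N -> p != q -> tv N p != tv N q.
Proof. move=> Hp Hq; apply: contra => /eqP E; apply/eqP; exact: tv_inj E. Qed.

Lemma pair_fort N (S : {set Vhat N}) u : 0 < u -> u.*2.+1 <= tree_size N ->
  Cp S u.*2 -> Cp S u.*2.+1 -> fortS S.
Proof.
move=> u0 Hu [F1 [i1 d1 p1]] [F2 [i2 d2 p2]].
have V0 : 0 < u <= tree_size N by lia.
have V1 : 0 < u.*2 <= tree_size N by lia.
have V2 : 0 < u.*2.+1 <= tree_size N by lia.
exists (F1 :|: F2); split.
- by apply/set0Pn; exists (tv N u.*2); rewrite in_setU i1.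
- by move=> x; rewrite in_setU => /orP[/d1|/d2].
move=> v; case: (eqVneq v (tv N u)) => [->|nv].
  rewrite /Pf => vF x xF a.
  case: (eqVneq x (tv N u.*2)) => [Ex|nx].
  + exists (tv N u.*2.+1); first by rewrite in_setU i2 orbT.
    rewrite Ex tv_neq //; last by lia.
    by rewrite adj_tv // eqxx !orbT.
  + exists (tv N u.*2); first by rewrite in_setU i1.
    by rewrite eq_sym nx adj_tv // eqxx.
have E1 : u.*2 %/ 2 = u by lia.
have E2 : u.*2.+1 %/ 2 = u by lia.
by apply: Pf_U; [apply: p1 | apply: p2]; rewrite ?E1 ?E2.
Qed.

Lemma C_step N (S : {set Vhat N}) h a b : 0 < N -> 0 < h -> h < nleaves N ->
  (h.*2.+1).*2.+1 <= tree_size N ->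
  (a == (h.*2).*2) || (a == (h.*2).*2.+1) -> (b == (h.*2.+1).*2) || (b == (h.*2.+1).*2.+1) ->
  Cp S a -> Cp S b -> tv N h \notin S -> Cp S h.
Proof.
move=> N0 h0 hL Hts Ha Hb [Fa [ia da pa]] [Fb [ib db pb]] nS.
have V0 : 0 < h <= tree_size N by lia.
have V1 : 0 < h.*2 <= tree_size N by lia.
have V2 : 0 < h.*2.+1 <= tree_size N by lia.
have Va : 0 < a <= tree_size N by lia.
have Vb : 0 < b <= tree_size N by lia.
exists ([set tv N h] :|: Fa :|: Fb); split.
- by rewrite !in_setU in_set1 eqxx.
- move=> x; rewrite !in_setU in_set1 => /orP[/orP[/eqP->|/da]|/db] //.
move=> v vpar.
case: (eqVneq v (tv N h.*2)) => [->|n1].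
  rewrite /Pf => vF x xF ax.
  case: (eqVneq x (tv N h)) => [Ex|nx].
  + exists (tv N a); first by rewrite !in_setU ia orbT.
    rewrite Ex tv_neq //; last by lia.
    rewrite adj_tv //; lia.
  + exists (tv N h); first by rewrite !in_setU in_set1 eqxx.
    rewrite eq_sym nx adj_tv //; lia.
case: (eqVneq v (tv N h.*2.+1)) => [->|n2].
  rewrite /Pf => vF x xF ax.
  case: (eqVneq x (tv N h)) => [Ex|nx].
  + exists (tv N b); first by rewrite !in_setU ib orbT.
    rewrite Ex tv_neq //; last by lia.
    rewrite adj_tv //; lia.
  + exists (tv N h); first by rewrite !in_setU in_set1 eqxx.
    rewrite eq_sym nx adj_tv //; lia.
apply: Pf_U; [apply: Pf_U|].
- apply: Pf_nadj => x; rewrite in_set1 => /eqP ->; apply/negP => ax.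
  case: (nbr_tv N0 V0 ax) => [E|[_ E]|[_ E]|[j Ej _]].
  + by rewrite E eqxx in vpar.
  + by rewrite E eqxx in n1.
  + by rewrite E eqxx in n2.
  + lia.
- have E : a %/ 2 = h.*2 by lia.
  by apply: pa; rewrite E.
- have E : b %/ 2 = h.*2.+1 by lia.
  by apply: pb; rewrite E.
Qed.


Lemma lvl_facts N m : m.+2 <= N ->
  4 ^ (N - m.+1) = 4 * 4 ^ (N - m.+2) /\ 4 ^ (N - m.+1) <= nleaves N.
Proof.
move=> mN; split.
  have -> : N - m.+1 = (N - m.+2).+1 by lia.
  by rewrite expnS.
by rewrite /nleaves; apply: leq_pexp2l => //; lia.
Qed.

Lemma main_base N (S : {set Vhat N}) h : 0 < N -> nleaves N <= h < (nleaves N).*2 ->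
  (sb S h < 2 -> fortS S) /\ (sb S h <= 2 -> fortS S \/ Cp S h).
Proof.
move=> N0 /andP[h1 h2].
have hj : h - nleaves N < nleaves N by lia.
set j := Ordinal hj.
have Eh : h = nleaves N + j by rewrite /= subnKC.
have Hb := sb_base S j N0; rewrite -Eh in Hb.
have F1 : (gg j 0 \in S) + (gg j 1 \in S) + (gg j 2 \in S) + (gg j 3 \in S) <= 1 -> fortS S.
  case: (boolP (gg j 0 \in S)) => g0; case: (boolP (gg j 1 \in S)) => g1;
  case: (boolP (gg j 2 \in S)) => g2; case: (boolP (gg j 3 \in S)) => g3 //= _;
  by [apply: (fort01 g0 g1) | apply: (fort23 g2 g3)].
split.
  move=> lt; apply: F1; lia.
move=> le; case: (boolP (tv N h \in S)) => th.
  by left; apply: F1; move: Hb; rewrite th; lia.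
by right; rewrite Eh; apply: base_C => //; [rewrite -Eh | lia].
Qed.

Lemma t_step m : t m.+2 = 4 * t m.+1 + 2.
Proof. by []. Qed.

Lemma main_ind N (S : {set Vhat N}) m : 0 < m <= N -> forall h, 4 ^ (N - m) <= h < (4 ^ (N - m)).*2 ->
  (sb S h < t m -> fortS S) /\ (sb S h <= t m -> fortS S \/ Cp S h).
Proof.
elim: m => [//|m IH] /andP[_ mN] h /andP[h1 h2].
have N0 : 0 < N by lia.
case: m IH mN h1 h2 => [|m] IH mN h1 h2.
  apply: main_base => //; move: h1 h2; rewrite /nleaves subn1; lia.
have [E4 LL] := lvl_facts mN.
set q := 4 ^ (N - m.+2) in h1 h2 E4.
have Lts := ts_eq N0.
have h0 : 0 < h by lia.
have IHc : forall c, c < 4 -> (sb S (4 * h + c) < t m.+1 -> fortS S) /\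
                             (sb S (4 * h + c) <= t m.+1 -> fortS S \/ Cp S (4 * h + c)).
  move=> c c4; apply: IH; first by lia.
  rewrite E4; lia.
have Hs' : (tv N h \in S) + (tv N h.*2 \in S) + (tv N h.*2.+1 \in S) + sb S (4 * h) + sb S (4 * h + 1)
           + sb S (4 * h + 2) + sb S (4 * h + 3) <= sb S h by apply: sb_step => //; lia.
have [A0 B0] := IHc 0 isT; have [A1 B1] := IHc 1 isT.
have [A2 B2] := IHc 2 isT; have [A3 B3] := IHc 3 isT.
rewrite addn0 in A0 B0.
rewrite t_step.
set tt := t m.+1 in A0 B0 A1 B1 A2 B2 A3 B3 *.
have PA : sb S (4 * h) <= tt -> sb S (4 * h + 1) <= tt -> fortS S.
  move=> /B0 [//|C0] /B1 [//|C1].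
  have E1 : (h.*2).*2 = 4 * h by lia.
  have E2 : (h.*2).*2.+1 = 4 * h + 1 by lia.
  apply: (@pair_fort _ _ h.*2); [lia | lia | rewrite E1 // | rewrite E2 //].

have PB : sb S (4 * h + 2) <= tt -> sb S (4 * h + 3) <= tt -> fortS S.
  move=> /B2 [//|C2] /B3 [//|C3].
  have E1 : (h.*2.+1).*2 = 4 * h + 2 by lia.
  have E2 : (h.*2.+1).*2.+1 = 4 * h + 3 by lia.
  apply: (@pair_fort _ _ h.*2.+1); [lia | lia | rewrite E1 // | rewrite E2 //].
have Key : sb S h <= 4 * tt + 2 -> fortS S \/
   [/\ tv N h \notin S, 4 * tt + 2 <= sb S h, (sb S (4 * h) = tt \/ sb S (4 * h + 1) = tt) & (sb S (4 * h + 2) = tt \/ sb S (4 * h + 3) = tt)].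
{ move=> le.
  case: (ltnP (sb S (4 * h)) tt) => [/A0 F|l0]; first by left.
  case: (ltnP (sb S (4 * h + 1)) tt) => [/A1 F|l1]; first by left.
  case: (ltnP (sb S (4 * h + 2)) tt) => [/A2 F|l2]; first by left.
  case: (ltnP (sb S (4 * h + 3)) tt) => [/A3 F|l3]; first by left.
  case: (leqP (sb S (4 * h)) tt) => k0; case: (leqP (sb S (4 * h + 1)) tt) => k1;
    try (by left; apply: PA).
  all: case: (leqP (sb S (4 * h + 2)) tt) => k2; case: (leqP (sb S (4 * h + 3)) tt) => k3;
    try (by left; apply: PB).
  all: right; split; first (apply/negP => th; rewrite th in Hs'; lia).
  all: lia. }

have hL : h < nleaves N by lia.
have Hts : (h.*2.+1).*2.+1 <= tree_size N by lia.
split.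
  move=> lt; have [//|[th lb E01 E23]] := Key (ltnW lt); exfalso; lia.
move=> le; case: (Key le) => [F|[th lb Ha Hb]]; first by left.
have [F|Ca] : fortS S \/ exists2 a, (a == (h.*2).*2) || (a == (h.*2).*2.+1) & Cp S a.
  case: Ha => E.
  - case: (B0 (eq_leq E)) => [F|C]; [by left | right; exists (4 * h) => //; apply/orP; left; apply/eqP; lia].
  - case: (B1 (eq_leq E)) => [F|C]; [by left | right; exists (4 * h + 1) => //; apply/orP; right; apply/eqP; lia].
  by left.
have [F|Cb] : fortS S \/ exists2 b, (b == (h.*2.+1).*2) || (b == (h.*2.+1).*2.+1) & Cp S b.
  case: Hb => E.
  - case: (B2 (eq_leq E)) => [F|C]; [by left | right; exists (4 * h + 2) => //; apply/orP; left; apply/eqP; lia].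
  - case: (B3 (eq_leq E)) => [F|C]; [by left | right; exists (4 * h + 3) => //; apply/orP; right; apply/eqP; lia].
  by left.
case: Ca => a Ea Ca; case: Cb => b Eb Cb.
by right; apply: (C_step N0 h0 hL Hts Ea Eb Ca Cb th).
Qed.

Lemma card_Vhat N : 0 < N -> #|Vhat N| = 6 * nleaves N.
Proof.
move=> N0; rewrite /Vhat card_option card_sum card_prod !card_ord ts_eq //.
have := nleaves_gt0 N; lia.
Qed.

Lemma t_formula n : 0 < n -> 3 * (t n + 1) = 8 * 4 ^ n.-1 + 1.
Proof.
elim: n => [//|n IH] _.
case: n IH => [//|n] IH.
rewrite t_step /= expnS; move: (IH isT) => /=; lia.
Qed.

Lemma Cp_top N (S : {set Vhat N}) : Cp S 1 -> None \notin S -> fortS S.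
Proof.
case=> F [iF dF pF] nS; exists (None |: F); split.
- by apply/set0Pn; exists None; rewrite in_setU1 eqxx.
- by move=> x; rewrite in_setU1 => /orP[/eqP->|/dF].
move=> v; rewrite /Pf in_setU1 negb_or => /andP [vN vF] x; rewrite in_setU1 => /orP[/eqP->|xF] a.
  case: v a vN vF => [[i|[j k]]|] //= /eqP i0 _.
  by rewrite (_ : Some (inl i) = tv N 1) ?iF // -tv_ord; congr (tv N _); rewrite i0.
have [x' x'F H] := pF v vN vF x xF a; exists x' => //; by rewrite in_setU1 x'F orbT.
Qed.

Lemma small_fort N (S : {set Vhat N}) : 0 < N -> #|S| <= t N -> fortS S.
Proof.
move=> N0 le; have top := sb_top S.
have H1 : 0 < N <= N by lia.
have H2 : 4 ^ (N - N) <= 1 < (4 ^ (N - N)).*2 by rewrite subnn expn0.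
have [A B] := main_ind S H1 H2.
case: (boolP (None \in S)) => nS.
  by apply: A; rewrite nS in top; lia.
have : sb S 1 <= t N by rewrite (negbTE nS) in top; lia.
by move=> /B [//|C]; apply: Cp_top.
Qed.

Lemma Zbound N : 0 < N -> t N + 1 <= Z (@ghat_adj N).
Proof.
move=> N0; rewrite /Z; apply: (big_ind (fun x => t N + 1 <= x)).
- rewrite card_Vhat //; have := t_formula N0; rewrite /nleaves; lia.
- by move=> x y Hx Hy; rewrite leq_min Hx Hy.
move=> S zf; rewrite leqNgt; apply/negP => lt; have le : #|S| <= t N by lia.
by move: zf; apply/negP; apply: fort_notzf; apply: small_fort.
Qed.

Lemma gg_val N (j : 'I_(nleaves N)) (k : 'I_4) : Some (inr (j, k)) = gg j k.
Proof. by rewrite /gg inord_val. Qed.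

Lemma conn_tree N n : forall p, p <= n -> 0 < p <= tree_size N -> connect (@ghat_adj N) (tv N p) None.
Proof.
elim: n => [|n IH] p pn Hp; first lia.
case: (eqVneq p 1) => [E1|p1].
  have [i [Ei ->]] := tv_valid Hp; apply: connect1 => /=; apply/eqP; lia.
have Hq : 0 < p %/ 2 <= tree_size N by lia.
apply: (connect_trans (connect1 _) (IH _ _ Hq)); last by lia.
rewrite adj_tv //; lia.
Qed.

Lemma conn_None N x : 0 < N -> connect (@ghat_adj N) x None.
Proof.
move=> N0; have L0 := nleaves_gt0 N.
case: x => [[i|[j k]]|]; last exact: connect0.
  by rewrite -tv_ord; apply: (@conn_tree N i.+1) => //; have := ltn_ord i; lia.
have [Hh _ _] := leaf_facts j N0.
have Cl : connect (@ghat_adj N) (tv N (nleaves N + j)) None by apply: (@conn_tree N (nleaves N + j)).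
have C0 : connect (@ghat_adj N) (gg j 0) None.
  by apply: connect_trans Cl; apply: connect1; rewrite adj_gg_leaf.
rewrite gg_val; case: k => [[|[|[|[|//]]]] Hk] /=.
- by [].
- by apply: connect_trans Cl; apply: connect1; rewrite adj_gg_leaf.
- by apply: connect_trans C0; apply: connect1; rewrite adj_gg.
- by apply: connect_trans C0; apply: connect1; rewrite adj_gg.
Qed.

Lemma ghat_connected N : 0 < N -> connected_graph (@ghat_adj N).
Proof.
move=> N0 x y; apply: connect_trans (conn_None x N0) _.
by rewrite (sym_connect_sym (@ghat_sym N)); apply: conn_None.
Qed.

Lemma card3 (T : finType) (a b c : T) : #|[:: a; b; c]| <= 3.
Proof. exact: card_size. Qed.

Lemma deg_sub N (v a b c : Vhat N) :
  (forall w, ghat_adj v w -> [|| w == a, w == b | w == c]) -> degree (@ghat_adj N) v <= 3.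
Proof.
move=> H; apply: leq_trans (card3 a b c); apply: subset_leq_card; apply/subsetP => w.
by rewrite !inE => /H.
Qed.

Lemma deg_le3 N v : 0 < N -> degree (@ghat_adj N) v <= 3.
Proof.
move=> N0; have L0 := nleaves_gt0 N; have Lts := ts_eq N0.
case: v => [[i|[j k]]|].
- have Hp : 0 < i.+1 <= tree_size N by have := ltn_ord i; lia.
  rewrite -tv_ord.
  case: (ltnP i.+1 (nleaves N)) => pL.
    apply: (@deg_sub _ _ (tv N (i.+1 %/ 2)) (tv N (i.+1).*2) (tv N (i.+1).*2.+1)) => w.
    rewrite ghat_sym => a; case: (nbr_tv N0 Hp a) => [->|[_ ->]|[_ ->]|[j Ej _]].
    + by rewrite eqxx.
    + by rewrite eqxx orbT.
    + by rewrite eqxx !orbT.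
    + lia.
  have hj : i.+1 - nleaves N < nleaves N by lia.
  apply: (@deg_sub _ _ (tv N (i.+1 %/ 2)) (gg (Ordinal hj) 0) (gg (Ordinal hj) 1)) => w.
  rewrite ghat_sym => a; case: (nbr_tv N0 Hp a) => [->|[H _]|[H _]|[j Ej [k k2 ->]]].
  + by rewrite eqxx.
  + lia.
  + lia.
  + have -> : j = Ordinal hj by apply: val_inj => /=; lia.
    by case: k k2 => [|[|]] //= _; rewrite eqxx ?orbT.
- rewrite gg_val; have k4 := ltn_ord k; set kk := nat_of_ord k in k4 *.
  have G : forall w, ghat_adj (gg j kk) w -> (kk < 2 /\ w = tv N (nleaves N + j)) \/
        exists2 k', k' < 4 & ~~ ((kk < 2) && (k' < 2)) && (k' != kk) && (w == gg j k').
    move=> w a; have a' := a; rewrite ghat_sym in a'.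
    case: (nbr_gg N0 k4 a') => [[H ->]|[k' k'4 /andP[nk /eqP E]]]; first by left.
    right; exists k' => //; rewrite nk E eqxx andbT andbT.
    by move: a; rewrite E adj_gg // eq_sym => /andP[_ ->].
  case: kk k4 G => [|[|[|[|//]]]] _ G.
  + apply: (@deg_sub _ _ (tv N (nleaves N + j)) (gg j 2) (gg j 3)) => w /G [[_ ->]|[k' k'4 /andP[/andP[H1 H2] /eqP ->]]].
      by rewrite eqxx.
    by case: k' k'4 H1 H2 => [|[|[|[|//]]]] //= _ _ _; rewrite eqxx ?orbT.
  + apply: (@deg_sub _ _ (tv N (nleaves N + j)) (gg j 2) (gg j 3)) => w /G [[_ ->]|[k' k'4 /andP[/andP[H1 H2] /eqP ->]]].
      by rewrite eqxx.
    by case: k' k'4 H1 H2 => [|[|[|[|//]]]] //= _ _ _; rewrite eqxx ?orbT.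
  + apply: (@deg_sub _ _ (gg j 0) (gg j 1) (gg j 3)) => w /G [[//]|[k' k'4 /andP[/andP[H1 H2] /eqP ->]]].
    by case: k' k'4 H1 H2 => [|[|[|[|//]]]] //= _ _ _; rewrite eqxx ?orbT.
  + apply: (@deg_sub _ _ (gg j 0) (gg j 1) (gg j 2)) => w /G [[//]|[k' k'4 /andP[/andP[H1 H2] /eqP ->]]].
    by case: k' k'4 H1 H2 => [|[|[|[|//]]]] //= _ _ _; rewrite eqxx ?orbT.
- apply: (@deg_sub _ _ (tv N 1) (tv N 1) (tv N 1)) => w.
  case: w => [[i|[j k]]|] //= /eqP i0.
  by rewrite -tv_ord (_ : i.+1 = 1) ?eqxx //; lia.
Qed.

Lemma max_deg3 N : 0 < N -> max_degree (@ghat_adj N) = 3.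
Proof.
move=> N0; have L0 := nleaves_gt0 N; apply/eqP; rewrite eqn_leq; apply/andP; split.
  by apply/bigmax_leqP => v _; apply: deg_le3.
set j := Ordinal L0.
rewrite /max_degree; apply: (leq_trans _ (leq_bigmax (gg j 2))).
have U : uniq [:: gg j 0; gg j 1; gg j 3] by rewrite /= !inE !negb_or !gg_neq.
have E : #|[:: gg j 0; gg j 1; gg j 3]| = 3 by move/card_uniqP: U.
rewrite -E; apply: subset_leq_card; apply/subsetP => w; rewrite !inE => /or3P[] /eqP ->; by rewrite adj_gg.
Qed.

Lemma rat_part n : 0 < n ->
  ((t n + 1)%:R : rat) = ((4%:R / 9%:R + 1 / (18 * 4 ^ n.-1)%:R) * (#|Vhat n|)%:R)%R
  /\ (4%:R / 9%:R * (#|Vhat n|)%:R <= ((t n + 1)%:R : rat))%R.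
Proof.
move=> n0; rewrite card_Vhat // /nleaves.
have E := t_formula n0.
set L := 4 ^ n.-1 in E *.
have L0 : 0 < L by rewrite expn_gt0.
have ET : ((t n + 1)%:R : rat) = ((8 * L + 1)%:R / 3%:R)%R.
  rewrite -E natrM mulrC mulKf //.
have LR : (L%:R : rat) != 0%R by rewrite pnatr_eq0 -lt0n.
rewrite ET !natrM !natrD; split.
  by field; rewrite LR.
have : ((0 : rat) <= L%:R)%R by apply: ler0n.
lra.
Qed.

Theorem mainTheorem2 :
  (forall n : nat, 1 <= n ->
     [/\ connected_graph (@ghat_adj n),
         max_degree (@ghat_adj n) = 3,
         #|Vhat n| = 6 * 4 ^ n.-1,
         (t n + 1 <= Z (@ghat_adj n))%N
       & [/\ (3 * (t n + 1) = 8 * 4 ^ n.-1 + 1)%N,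
             ((t n + 1)%:R : rat)
               = ((4%:R / 9%:R + 1 / (18 * 4 ^ n.-1)%:R) * (#|Vhat n|)%:R)%R
           & (4%:R / 9%:R * (#|Vhat n|)%:R <= ((t n + 1)%:R : rat))%R]]) /\
  ~ (forall (T : finType) (e : rel T),
       symmetric e -> irreflexive e ->
       connected_graph e -> max_degree e = 3 ->
       (3 * Z e <= #|T| + 6)%N).
Proof.
split.
  move=> n n1; have [R1 R2] := rat_part n1.
  split; [exact: ghat_connected | exact: max_deg3 | by rewrite card_Vhat | exact: Zbound |].
  by split => //; exact: t_formula.
move=> H.
have := H (Vhat 2) (@ghat_adj 2) (@ghat_sym 2) (@ghat_irr 2) (ghat_connected (isT : 0 < 2)) (max_deg3 (isT : 0 < 2)).
rewrite card_Vhat //; have := Zbound (isT : 0 < 2); rewrite /nleaves /=; lia.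
Qed.
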